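(* For every $0<\alpha<\varepsilon<\frac{1}{2\omega}$ and every $z\in\mathbf H$, $$\Lambda_\alpha(z)\le\frac{\Lambda_\varepsilon(z)}{1-\omega\varepsilon}\le\frac{\Lambda_\alpha(z)}{1-2\omega\varepsilon}.$$
   Context: Let $\mathfrak I=(a,b)\subset\mathbb R$ be a bounded interval, $\mathcal H=L^2(\mathfrak I)$ with inner product $\langle\cdot,\cdot\rangle$ and norm $\|\cdot\|$. Let $A=-\partial_{xx}$ with domain $H^2(\mathfrak I)\cap H^1_0(\mathfrak I)$, $\lambda_1>0$ its first eigenvalue, $\mathcal H^r=D(A^{r/2})$, $\|u\|_r=\|A^{r/2}u\|$, $B=I+A$, and on $\mathcal H^r$ the inner product $(u,v)_r=\langle A^{(r-1)/2}B^{1/2}u,A^{(r-1)/2}B^{1/2}v\rangle$ with norm $|||u|||_r^2=\|u\|_{r-1}^2+\|u\|_r^2$. Set $\omega=\sqrt{(1+\lambda_1)/\lambda_1}$. Let $\mu:(0,\infty)\to[0,\infty)$, $\mu\not\equiv0$, nonincreasing, absolutely continuous, with $\kappa:=\int_0^\infty\mu(s)\,ds\in(0,\infty)$, $\int_0^\infty s\mu(s)\,ds=1$, $\lim_{s\to0^+}\mu(s)<\infty$, and $\mu'+\delta\mu\le0$ a.e. for some $\delta>0$. $\mathcal M=L^2_\mu(\mathbb R^+;\mathcal H^1)$ with norm $\|\eta\|_{\mathcal M}^2=\int_0^\infty\mu(s)\|\eta(s)\|_1^2ds$; $\mathbf H=\mathcal H^1\times\mathcal M$ with $\|(u,\eta)\|_{\mathbf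 H}^2=|||u|||_1^2+\|\eta\|_{\mathcal M}^2$. Given $f\in L^2(\mathfrak I)$, let $F(x)=\int_a^xf(y)\,dy$, and for $\varepsilon>0$ and $z=(u,\eta)\in\mathbf H$ define $$\Lambda_\varepsilon(z)=\|z\|_{\mathbf H}^2+\frac2\kappa\int_0^\infty\mu(s)\langle F,\eta_x(s)\rangle\,ds+\frac2\kappa\|F\|^2-\frac{\varepsilon}{\sqrt\kappa}\int_0^\infty\mu(s)(u,\eta(s))_1\,ds.$$ *)

(* Defs.v *)
From HB Require Import structures.
From mathcomp Require Import all_boot all_order all_algebra.
From mathcomp Require Import all_classical all_reals all_analysis.
Set Implicit Arguments. Unset Strict Implicit. Unset Printing Implicit Defensive.
Import Order.TTheory GRing.Theory Num.Theory.
Import numFieldNormedType.Exports.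
Local Open Scope classical_set_scope.
Local Open Scope ring_scope.

Section Defs.
Variable R : realType.
Local Notation leb := (@lebesgue_measure R).

Definition Itv (a b : R) : set R := `]a, b[.

Definition L2 (a b : R) (g : R -> R) : Prop :=
  measurable_fun (Itv a b) g /\
  leb.-integrable (Itv a b) (fun x => ((g x) ^+ 2)%:E).

Definition ipL2 (a b : R) (g h : R -> R) : R :=
  Rintegral leb (Itv a b) (fun x => g x * h x).
Definition nrm2 (a b : R) (g : R -> R) : R := ipL2 a b g g.

(* u ∈ H^1_0(a,b) = H^1 = D(A^{1/2}), with (weak) derivative ux ∈ L^2:
   u is the primitive of ux vanishing at a and at b. *)
Definition H10 (a b : R) (u ux : R -> R) : Prop :=
  L2 a b ux /\
  (forall x, a <= x <= b -> u x = Rintegral leb `[a, x] ux) /\ u b = 0.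

(* first Dirichlet eigenvalue of -d^2/dx^2 on (a,b) *)
Definition lambda1 (a b : R) : R := (pi / (b - a)) ^+ 2.
Definition omega (a b : R) : R := Num.sqrt ((1 + lambda1 a b) / lambda1 a b).

(* (u,v)_1 = <B^{1/2}u, B^{1/2}v> = <u,v> + <u_x,v_x> ;
   |||u|||_1^2 = ||u||^2 + ||u_x||^2 ;  ||u||_1 = ||u_x|| *)
Definition ip1 (a b : R) (u ux v vx : R -> R) : R :=
  ipL2 a b u v + ipL2 a b ux vx.

Definition Rplus_set : set R := `]0, +oo[.

Definition memory_kernel (mu : R -> R) : Prop :=
  (forall s, 0 < s -> 0 <= mu s) /\
  (exists s, 0 < s /\ mu s != 0) /\
  (forall s t, 0 < s -> s <= t -> mu t <= mu s) /\
  (* absolutely continuous (locally on (0,oo)) with a.e. derivative dmu,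
     satisfying mu' + delta mu <= 0 a.e. for some delta > 0 *)
  (exists dmu : R -> R,
     (forall s t, 0 < s -> s <= t -> leb.-integrable `[s, t] (EFin \o dmu)) /\
     (forall s t, 0 < s -> s <= t -> mu t - mu s = Rintegral leb `[s, t] dmu) /\
     exists delta : R, 0 < delta /\
       {ae leb, forall s, Rplus_set s -> dmu s + delta * mu s <= 0}) /\
  leb.-integrable Rplus_set (EFin \o mu) /\
  0 < Rintegral leb Rplus_set mu /\
  leb.-integrable Rplus_set (fun s => (s * mu s)%:E) /\
  Rintegral leb Rplus_set (fun s => s * mu s) = 1 /\
  cvg (mu s @[s --> 0^'+]).

Definition kappa (mu : R -> R) : R := Rintegral leb Rplus_set mu.

(* eta ∈ M = L^2_mu(R^+; H^1): eta s ∈ H^1 (with derivative etax s) for s>0,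
   (strongly) measurable in s (joint measurability), and finite M-norm. *)
Definition memory_elt (a b : R) (mu : R -> R) (eta etax : R -> R -> R) : Prop :=
  (forall s, 0 < s -> H10 a b (eta s) (etax s)) /\
  measurable_fun (Rplus_set `*` Itv a b) (fun p : R * R => etax p.1 p.2) /\
  leb.-integrable Rplus_set (fun s => (mu s * nrm2 a b (etax s))%:E).

Definition primF (a : R) (f : R -> R) : R -> R :=
  fun x => Rintegral leb `[a, x] f.

Definition normH2 (a b : R) (mu : R -> R) (u ux : R -> R) (etax : R -> R -> R) : R :=
  nrm2 a b u + nrm2 a b ux + Rintegral leb Rplus_set (fun s => mu s * nrm2 a b (etax s)).

Definition Lambda (a b : R) (f mu : R -> R) (eps : R)
    (u ux : R -> R) (eta etax : R -> R -> R) : R :=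
  normH2 a b mu u ux etax
  + 2 / kappa mu * Rintegral leb Rplus_set
                     (fun s => mu s * ipL2 a b (primF a f) (etax s))
  + 2 / kappa mu * nrm2 a b (primF a f)
  - eps / Num.sqrt (kappa mu) * Rintegral leb Rplus_set
                     (fun s => mu s * ip1 a b u ux (eta s) (etax s)).

End Defs.

(* Main.v *)
Require Import Defs.
From HB Require Import structures.
From mathcomp Require Import all_boot all_order all_algebra.
From mathcomp Require Import all_classical all_reals all_analysis.
From mathcomp Require Import ring lra measurable_realfun.
Import Order.TTheory GRing.Theory Num.Theory.
Import numFieldNormedType.Exports.
Local Open Scope ring_scope.
Section P1.
Context {R : realType}.
Local Notation leb := (@lebesgue_measure R).
Local Open Scope classical_set_scope.

Lemma ge0_le_integral_nm (D : set (measurableTypeR R)) (f1 f2 : measurableTypeR R -> \bar R) :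
  (forall x, D x -> (0 <= f1 x)%E) -> (forall x, D x -> (f1 x <= f2 x)%E) ->
  (\int[leb]_(x in D) f1 x <= \int[leb]_(x in D) f2 x)%E.
Proof.
move=> f10 f12.
have f20 : forall x, D x -> (0 <= f2 x)%E.
  by move=> x Dx; apply: le_trans (f10 x Dx) (f12 x Dx).
rewrite (ge0_integralE leb f10) (ge0_integralE leb f20).
apply: le_ereal_sup => _ [h hf <-]; exists h => //= x.
apply: le_trans (hf x) _; rewrite /patch; case: ifP => // /set_mem Dx.
exact: f12.
Qed.

Lemma S1 (D : set (measurableTypeR R)) (h G : R -> R) : measurable D ->
  leb.-integrable D (EFin \o G) -> (forall x, D x -> `|h x| <= G x) ->
  `|Rintegral leb D h| <= Rintegral leb D G.
Proof.
move=> mD iG hG.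
have G0 : forall x, D x -> 0 <= G x by move=> x Dx; exact: le_trans (hG x Dx).
have fG := integrable_fin_num mD iG.
set M := (\int[leb]_(x in D) (EFin \o G) x)%E in fG.
have M0 : (0 <= M)%E by apply: integral_ge0 => x Dx; rewrite lee_fin G0.
have Pp : (\int[leb]_(x in D) ((EFin \o h)^\+ x) <= M)%E.
  apply: ge0_le_integral_nm => x Dx; first exact: funepos_ge0.
  rewrite funeposE /= -EFin_max lee_fin ge_max (G0 _ Dx) andbT.
  exact: le_trans (ler_norm _) (hG x Dx).
have Pn : (\int[leb]_(x in D) ((EFin \o h)^\- x) <= M)%E.
  apply: ge0_le_integral_nm => x Dx; first exact: funeneg_ge0.
  rewrite funenegE /= -EFin_max lee_fin ge_max (G0 _ Dx) andbT.
  by apply: le_trans (hG x Dx); rewrite -normrN; exact: ler_norm.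
have P0 : (0 <= \int[leb]_(x in D) ((EFin \o h)^\+ x))%E.
  by apply: integral_ge0 => x _; exact: funepos_ge0.
have N0 : (0 <= \int[leb]_(x in D) ((EFin \o h)^\- x))%E.
  by apply: integral_ge0 => x _; exact: funeneg_ge0.
rewrite /Rintegral integralE -/M.
move: Pp Pn P0 N0 M0 fG.
set P := (\int[leb]_(x in D) _)%E; set N := (\int[leb]_(x in D) _)%E.
case: P => [p| |]; case: N => [n| |]; case: M => [m| |] //=.
rewrite !lee_fin => pm nm p0 n0 m0 _.
idtac.
rewrite ler_norml; apply/andP; split; lra.
Qed.

End P1.
Section P2.
Context {R : realType}.
Local Notation leb := (@lebesgue_measure R).
Local Open Scope classical_set_scope.

Lemma lin2 (D : set (measurableTypeR R)) (f g : R -> R) (a b : R) : measurable D ->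
  leb.-integrable D (EFin \o f) -> leb.-integrable D (EFin \o g) ->
  leb.-integrable D (EFin \o (fun x => a * f x + b * g x)) /\
  Rintegral leb D (fun x => a * f x + b * g x) =
    a * Rintegral leb D f + b * Rintegral leb D g.
Proof.
move=> mD ifn ig.
have iaf : leb.-integrable D (EFin \o (fun x => a * f x)).
  have := integrableZl mD a ifn.
  by apply: eq_integrable => // x _ /=; rewrite EFinM.
have ibg : leb.-integrable D (EFin \o (fun x => b * g x)).
  have := integrableZl mD b ig.
  by apply: eq_integrable => // x _ /=; rewrite EFinM.
split.
  have := integrableD mD iaf ibg.
  by apply: eq_integrable => // x _ /=; rewrite EFinD.
by rewrite RintegralD // RintegralZl // RintegralZl.
Qed.

Lemma sqr_normr (x : R) : `|x| ^+ 2 = x ^+ 2.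
Proof. exact: real_normK (num_real x). Qed.

Lemma amgm_pt (r A B : R) : 0 < r ->
  `|A * B| <= r / 2 * A ^+ 2 + 1 / (2 * r) * B ^+ 2.
Proof.
move=> r0.
rewrite normrM -(sqr_normr A) -(sqr_normr B).
set a := `|A|; set b := `|B|.
rewrite -subr_ge0.
have -> : r / 2 * a ^+ 2 + 1 / (2 * r) * b ^+ 2 - a * b = (r * a - b) ^+ 2 / (2 * r).
  by field; rewrite gt_eqF.
by apply: divr_ge0; [exact: sqr_ge0 | lra].
Qed.

Lemma CSr (D : set (measurableTypeR R)) (f g : R -> R) (r : R) : measurable D ->
  leb.-integrable D (fun x => (f x ^+ 2)%:E) ->
  leb.-integrable D (fun x => (g x ^+ 2)%:E) -> 0 < r ->
  `|Rintegral leb D (fun x => f x * g x)| <=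
    r / 2 * Rintegral leb D (fun x => f x ^+ 2)
    + 1 / (2 * r) * Rintegral leb D (fun x => g x ^+ 2).
Proof.
move=> mD if2 ig2 r0.
have [iG eG] := @lin2 D (fun x => f x ^+ 2) (fun x => g x ^+ 2) (r / 2) (1 / (2 * r)) mD if2 ig2.
rewrite -eG; apply: S1 => // x _; exact: amgm_pt.
Qed.

Lemma amgm_cs (I A B : R) : 0 < A -> 0 <= B ->
  (forall r, 0 < r -> `|I| <= r / 2 * A + 1 / (2 * r) * B) -> I ^+ 2 <= A * B.
Proof.
move=> A0 B0 H.
have [I0|I0] := eqVneq I 0; first by rewrite I0 expr0n /= mulr_ge0 // ltW.
have nI : 0 < `|I| by rewrite normr_gt0.
have := H (`|I| / A) (divr_gt0 nI A0).
have -> : `|I| / A / 2 * A + 1 / (2 * (`|I| / A)) * B = `|I| / 2 + A * B / (2 * `|I|).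
  by field; rewrite !gt_eqF.
move=> h.
have h2 : `|I| * `|I| <= A * B.
  have : `|I| / 2 <= A * B / (2 * `|I|) by lra.
  move=> h3.
  have e1 : `|I| * `|I| = (`|I| / 2) * (2 * `|I|) by field.
  have e2 : A * B = (A * B / (2 * `|I|)) * (2 * `|I|) by field; rewrite gt_eqF.
  rewrite e1 [leRHS]e2 ler_pM2r //; lra.
by rewrite -(sqr_normr I) expr2.
Qed.

End P2.
Section P3.
Context {R : realType}.
Local Notation leb := (@lebesgue_measure R).
Local Open Scope classical_set_scope.

Lemma cst_int (a b : R) (k : R) : leb.-integrable `[a, b] (EFin \o (fun=> k)).
Proof.
apply: continuous_compact_integrable; first exact: segment_compact.
by move=> x; exact: cvg_cst.
Qed.

Lemma L2_int (a b : R) (g : R -> R) : a < b -> L2 a b g ->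
  leb.-integrable `]a, b[ (EFin \o g) /\ leb.-integrable `[a, b] (EFin \o g).
Proof.
move=> ab [mg ig2].
have io : leb.-integrable `]a, b[ (EFin \o g).
  have i1 : leb.-integrable `]a, b[ (EFin \o (fun=> 1 : R)).
    apply: integrableS (cst_int a b 1) => //.
    by apply: subset_itvW.
  have [iG _] := lin2 `]a, b[ (fun=> 1) (fun x => g x ^+ 2) (1/2) (1/2) (measurable_itv _) i1 ig2.
  apply: le_integrable iG => //.
    by apply/measurable_EFinP.
  move=> x _ /=; rewrite lee_fin.
  have h := sqr_ge0 (`|g x| - 1); have e := sqr_normr (g x).
  have g0 : 0 <= g x ^+ 2 by exact: sqr_ge0.
  rewrite [X in _ <= X]ger0_norm; last by lra.
  rewrite expr2 in e h g0; nra.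
split => //.
apply/integrableP; split.
  apply/measurable_EFinP; apply: measurable_fun_itv_cc; exact: mg.
move/integrableP : io => [mio fio].
rewrite (@integral_itv_bndoo _ _ _ _ true false) //.
by apply: measurableT_comp => //.
Qed.

End P3.
Section P4.
Context {R : realType}.
Local Notation leb := (@lebesgue_measure R).
Local Open Scope classical_set_scope.

Lemma prim_props (a b : R) (v g : R -> R) : a < b ->
  leb.-integrable `[a, b] (EFin \o g) ->
  (forall x, a <= x <= b -> v x = Rintegral leb `[a, x] g) ->
  measurable_fun `]a, b[ v /\ leb.-integrable `]a, b[ (fun x => (v x ^+ 2)%:E).
Proof.
move=> ab ig hv.
pose P x := Rintegral leb `[a, x] g.
have cP : {within `[a, b], continuous P}.
  exact: (parameterized_integral_continuous (ltW ab) ig).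
have vP : {in `]a, b[, P =1 v}.
  move=> x; rewrite inE /= in_itv /= => /andP[ax xb].
  by rewrite hv // (ltW ax) (ltW xb).
split.
  apply: (eq_measurable_fun P vP).
  have : measurable_fun `[a, b] P.
    by apply: subspace_continuous_measurable_fun => //.
  by apply: measurable_funS => //; apply: subset_itvW.
have cP2 : {within `[a, b], continuous (P \* P)}.
  by move=> x; apply: continuousM; exact: cP.
have iab := continuous_compact_integrable (@segment_compact _ a b) cP2.
have : leb.-integrable `]a, b[ (EFin \o (P \* P)).
  by apply: integrableS iab => //; apply: subset_itvW.
apply: eq_integrable => // x xI /=.
by rewrite -vP // expr2.
Qed.

End P4.
Section P5. Context {R : realType}.
Local Notation leb := (@lebesgue_measure R).
Local Open Scope classical_set_scope.
Lemma dF (a b x : R) : is_derive x 1 (fun t : R => (t - a) ^+ 2 * ((b - a) / 2) - (t - a) ^+ 3 / 3) ((x - a) * (b - x)).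
Proof.
apply: is_derive_eq.
rewrite !scaler0 !subr0 !scaler1 ?addr0 ?add0r ?oppr0.
by rewrite /GRing.scale /=; field.
Qed.

Lemma int_w (a b : R) : a < b ->
  Rintegral leb `]a, b[ (fun x => (x - a) * (b - x)) = (b - a) ^+ 3 / 6.
Proof.
move=> ab.
pose F := fun t : R => (t - a) ^+ 2 * ((b - a) / 2) - (t - a) ^+ 3 / 3.
pose w := fun x : R => (x - a) * (b - x).
have cw : continuous w.
  move=> x; apply: (@continuousM _ _ (fun x => x - a) (fun x => b - x)).
    by apply: continuousB => //; exact: cvg_cst.
  by apply: continuousB => //; exact: cvg_cst.
have cF : continuous F.
  move=> x; apply: differentiable_continuous; apply/derivable1_diffP.
  by case: (dF a b x).
have := @continuous_FTC2 _ w F a b ab (continuous_subspaceT cw).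
have dFoo : derivable_oo_LRcontinuous F a b.
  split.
  - by move=> x _; case: (dF a b x).
  - exact: cvg_at_right_filter (cF a).
  - exact: cvg_at_left_filter (cF b).
move=> /(_ dFoo).
have Fw : {in `]a, b[%R, F^`() =1 w}.
  by move=> x _; rewrite derive1E; case: (dF a b x).
move=> /(_ Fw) h.
rewrite /Rintegral -(@integral_itv_bndoo _ _ _ _ true false); last first.
  apply/measurable_EFinP; apply: subspace_continuous_measurable_fun => //.
  exact: continuous_subspaceT.
rewrite [X in fine X = _](_ : _ = (F b)%:E - (F a)%:E)%E; last by rewrite -h.
rewrite -EFinB /= /F.
by field.
Qed.
End P5.
Section P6.
Context {R : realType}.
Local Notation leb := (@lebesgue_measure R).
Local Open Scope classical_set_scope.

Lemma int_oc (a b : R) (h : R -> R) :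
  leb.-integrable `]a, b[ (EFin \o h) -> leb.-integrable `[a, b] (EFin \o h).
Proof.
move=> /integrableP[mh fh]; apply/integrableP; split.
  apply/measurable_EFinP; apply: (measurable_fun_itv_cc (b0:=false) (b1:=true)).
  exact/measurable_EFinP.
rewrite (@integral_itv_bndoo _ _ _ _ true false) //.
by apply: measurableT_comp => //.
Qed.

Lemma Rint_oc (a b : R) (h : R -> R) :
  leb.-integrable `]a, b[ (EFin \o h) ->
  Rintegral leb `[a, b] h = Rintegral leb `]a, b[ h.
Proof.
move=> /integrableP[mh fh].
by rewrite /Rintegral (@integral_itv_bndoo _ _ _ _ true false).
Qed.

Lemma Rint_one (x y : R) b0 b1 : x <= y ->
  Rintegral leb [set` Interval (BSide b0 x) (BSide b1 y)] (fun=> 1 ^+ 2) = y - x.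
Proof.
move=> xy; rewrite Rintegral_cst //= lebesgue_measure_itv /= expr1n mul1r.
rewrite -EFinD.
rewrite lte_fin; case: ifPn => [//|]; rewrite -leNgt => yx.
have -> : y = x by apply/eqP; rewrite eq_le yx xy.
by rewrite subrr.

Qed.

Lemma cont_int_oo (a b : R) (f : R -> R) : continuous f ->
  leb.-integrable `]a, b[ (EFin \o f).
Proof.
move=> cf.
have := continuous_compact_integrable (@segment_compact _ a b) (continuous_subspaceT cf).
by move=> iab; apply: integrableS iab => //; apply: subset_itvW.
Qed.

Lemma pw_bound (a b : R) (v vx : R -> R) (x : R) : a < x < b -> H10 a b v vx ->
  v x ^+ 2 <= (x - a) * (b - x) / (b - a) * nrm2 a b vx.
Proof.
move=> /andP[ax xb] [[mvx ivx2] [hv vb]].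
have ab : a < b by apply: lt_trans xb.
have [_ ivxc] := L2_int a b vx ab (conj mvx ivx2).
have ivx2c : leb.-integrable `[a, b] (EFin \o (fun x => vx x ^+ 2)) by exact: int_oc.
have i1 : forall (D : set (measurableTypeR R)), measurable D -> D `<=` `[a, b] ->
    leb.-integrable D (fun x => ((fun=> 1 : R) x ^+ 2)%:E).
  move=> D mD Dab; apply: integrableS (cst_int a b (1 ^+ 2)) => //.
have i2 : forall (D : set (measurableTypeR R)), measurable D -> D `<=` `[a, b] ->
    leb.-integrable D (fun x => (vx x ^+ 2)%:E).
  by move=> D mD Dab; apply: integrableS ivx2c.
set B1 := Rintegral leb `[a, x] (fun x => vx x ^+ 2).
set B2 := Rintegral leb `]x, b] (fun x => vx x ^+ 2).
set H := nrm2 a b vx.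
have sab1 : `[a, x] `<=` `[a, b] by apply: subset_itvl; rewrite bnd_simp ltW.
have sab2 : `]x, b] `<=` `[a, b].
  by move=> y /=; rewrite !in_itv /= => /andP[xy ->]; rewrite andbT ltW // (lt_trans ax xy).
have h1 : v x ^+ 2 <= (x - a) * B1.
  rewrite hv ?(ltW ax) ?(ltW xb) //.
  apply: amgm_cs; [by rewrite subr_gt0 | by apply: Rintegral_ge0 => y _; exact: sqr_ge0 |].
  move=> r r0.
  have := CSr `[a, x] (fun _ : R => (1 : R)) vx r (measurable_itv _) (i1 _ (measurable_itv _) sab1) (i2 _ (measurable_itv _) sab1) r0.
  rewrite Rint_one ?(ltW ax) //.
  by under eq_Rintegral do rewrite mul1r.
have h2 : v x ^+ 2 <= (b - x) * B2.
  have eqI : Rintegral leb `]x, b] vx = - v x.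
    rewrite -(Rintegral_itvB ivxc); last 2 first.
    - by rewrite bnd_simp ltW.
    - by rewrite bnd_simp ltW.
    rewrite -hv ?lexx ?(ltW ab) // vb sub0r.
    by rewrite hv // (ltW ax) (ltW xb).
  have -> : v x ^+ 2 = (Rintegral leb `]x, b] vx) ^+ 2 by rewrite eqI sqrrN.
  apply: amgm_cs; [by rewrite subr_gt0 | by apply: Rintegral_ge0 => y _; exact: sqr_ge0 |].
  move=> r r0.
  have := CSr `]x, b] (fun _ : R => (1 : R)) vx r (measurable_itv _) (i1 _ (measurable_itv _) sab2) (i2 _ (measurable_itv _) sab2) r0.
  rewrite Rint_one ?(ltW xb) //.
  by under eq_Rintegral do rewrite mul1r.
have h3 : B1 + B2 = H.
  rewrite /H /nrm2 /ipL2 -Rint_oc; last exact: ivx2.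
  rewrite /B2 -(Rintegral_itvB ivx2c); last 2 first.
  - by rewrite bnd_simp ltW.
  - by rewrite bnd_simp ltW.
  rewrite /B1; under [X in _ + (_ - X) = _]eq_Rintegral do rewrite expr2.
  under eq_Rintegral do rewrite expr2.
  rewrite addrC subrK.
  by under eq_Rintegral do rewrite expr2.
have pq : 0 < b - a by rewrite subr_gt0.
have p0 : 0 < x - a by rewrite subr_gt0.
have q0 : 0 < b - x by rewrite subr_gt0.
have key : v x ^+ 2 * (b - a) <= (x - a) * (b - x) * H.
  have -> : b - a = (x - a) + (b - x) by ring.
  rewrite -h3; nra.
rewrite mulrAC ler_pdivlMr //.
Qed.

End P6.
Section P7.
Context {R : realType}.
Local Notation leb := (@lebesgue_measure R).
Local Open Scope classical_set_scope.

Lemma cont_w (a b k : R) : continuous (fun x : R => (x - a) * (b - x) * k).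
Proof.
move=> x; apply: (@continuousM _ _ (fun x => (x - a) * (b - x)) (fun=> k)); last exact: cvg_cst.
apply: (@continuousM _ _ (fun x => x - a) (fun x => b - x)).
  by apply: continuousB => //; exact: cvg_cst.
by apply: continuousB => //; exact: cvg_cst.
Qed.

Lemma poinc (a b : R) (v vx : R -> R) : a < b -> H10 a b v vx ->
  nrm2 a b v <= (b - a) ^+ 2 / 6 * nrm2 a b vx.
Proof.
move=> ab hH; have hH' := hH; move: hH' => [[mvx ivx2] [hv vb]].
have [_ ivxc] := L2_int a b vx ab (conj mvx ivx2).
have [mv iv2] := prim_props a b v vx ab ivxc hv.
set H := nrm2 a b vx.
have iw : leb.-integrable `]a, b[ (EFin \o (fun x => (x - a) * (b - x) * ((b - a)^-1 * H))).
  exact: cont_int_oo (cont_w a b _).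
rewrite /nrm2 /ipL2 /Itv.
apply: (@le_trans _ _ (Rintegral leb `]a, b[ (fun x => (x - a) * (b - x) * ((b - a)^-1 * H)))).
  apply: le_Rintegral.
  - exact: measurable_itv.
  - by move: iv2; apply: eq_integrable.
  - exact: iw.
  - move=> x; rewrite /= in_itv /= => xab.
    rewrite -expr2 mulrA; exact: pw_bound xab hH.
rewrite RintegralZr; last 2 first.
- exact: measurable_itv.
- apply: cont_int_oo => x.
  apply: (@continuousM _ _ (fun x => x - a) (fun x => b - x)).
    by apply: continuousB => //; exact: cvg_cst.
  by apply: continuousB => //; exact: cvg_cst.
rewrite int_w //.
have : b - a != 0 by rewrite subr_eq0 gt_eqF.
move=> nz; rewrite le_eqVlt; apply/orP; left; apply/eqP; by field.
Qed.

End P7.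
Section P8.
Context {R : realType}.

Lemma cos_1710_lt0 : cos (17 / 10 : R) < 0.
Proof.
set x : R := 17 / 10.
rewrite -(opprK (cos _)) oppr_lt0; have /cvgN h := @cvg_cos_coeff' R x.
rewrite -(cvg_lim (@Rhausdorff R) h).
apply: (@lt_trans _ _ (\sum_(0 <= i < 3) - cos_coeff' x i)).
  do 3 rewrite big_nat_recl//; rewrite big_nil addr0.
  rewrite /cos_coeff' -!exprnP /= (_ : 0.*2 = 0)%N // (_ : 1.*2 = 2)%N // (_ : 2.*2 = 4)%N //.
  rewrite (_ : 4`! = 24)%N // (_ : 2`! = 2)%N // fact0 /x.
  rewrite !exprS !expr0 /=. lra.
rewrite -seriesN lt_sum_lim_series //.
  by move/cvgP in h; by rewrite seriesN.
move=> d.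
rewrite /cos_coeff' -!exprnP.
have e1 : (-1) ^+ (3 + d.*2) = -1 :> R.
  by rewrite -signr_odd oddD odd_double /= expr1.
have e3 : (-1) ^+ (3 + d.*2.+1) = 1 :> R.
  by rewrite -signr_odd oddD /= odd_double /= expr0.
have e2 : (3 + d.*2.+1).*2 = ((3 + d.*2).*2).+2 by rewrite addnS doubleS.
rewrite e1 e3 e2.
set k := (3 + d.*2).*2.
have k6 : (6 <= k)%N by rewrite /k doubleD leq_addr.
clearbody k.
rewrite (factS k.+1) (factS k) !natrM !mul1r mulN1r !mulNr opprK.
have X0 : 0 < x ^+ k by rewrite exprn_gt0 // /x divr_gt0.
have F0 : 0 < k`!%:R :> R by rewrite ltr0n fact_gt0.
have K0 : 0 < (k.+2)%:R * (k.+1)%:R :> R by rewrite mulr_gt0 // ltr0n.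
have -> : x ^+ k / k`!%:R - x ^+ k.+2 / ((k.+2)%:R * ((k.+1)%:R * k`!%:R)) =
    x ^+ k / k`!%:R * (1 - x ^+ 2 / ((k.+2)%:R * (k.+1)%:R)).
  rewrite !exprS; field.
  have kk : (0:R) <= k%:R := ler0n _ _.
  by apply/and3P; split; rewrite gt_eqF //; lra.
apply: mulr_gt0; first exact: divr_gt0.
rewrite subr_gt0 ltr_pdivrMr // mul1r.
have : (56 <= k.+2 * k.+1)%N by apply: (@leq_mul 8 7); rewrite ltnS.
rewrite -(ler_nat R) natrM => h56.
apply: lt_le_trans h56; rewrite /x; lra.
Qed.
End P8.
Section P9.
Context {R : realType}.

Lemma fin_alg (Q T w al ep : R) : 0 < w -> 0 < al -> al < ep -> ep < 1 / (2 * w) ->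
  `|T| <= w * Q ->
  Q - al * T <= (Q - ep * T) / (1 - w * ep) /\
  (Q - ep * T) / (1 - w * ep) <= (Q - al * T) / (1 - 2 * w * ep).
Proof.
move=> w0 a0 ae ew hT.
have we : 2 * w * ep < 1.
  move: ew; rewrite ltr_pdivlMr ?mulr_gt0 // => h.
  by have -> : 2 * w * ep = ep * (2 * w) by ring.
have wep : 0 < w * ep by rewrite mulr_gt0 // (lt_trans a0).
have Q0 : 0 <= Q.
  have : 0 <= w * Q by apply: le_trans hT.
  by rewrite pmulr_rge0.
have := hT; rewrite ler_norml => /andP[hT1 hT2].
have d1 : 0 < 1 - w * ep by lra.
have d2 : 0 < 1 - 2 * w * ep by lra.
split.
  rewrite ler_pdivlMr //.
  set k := ep - al + w * ep * al.
  have k0 : 0 < k.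
    have : 0 < w * ep * al by rewrite mulr_gt0.
    rewrite /k; lra.
  have kT : k * T <= k * (w * Q) by rewrite ler_pM2l.
  have kle : k <= ep.
    have : w * ep * al <= al.
      rewrite -[leRHS]mul1r ler_pM2r //; lra.
    rewrite /k; lra.
  have h : k * (w * Q) <= ep * (w * Q).
    by apply: ler_wpM2r => //; rewrite mulr_ge0 // ltW.
  have -> : (Q - al * T) * (1 - w * ep) = Q - ep * T + (k * T - w * ep * Q).
    by rewrite /k; ring.
  have : k * T - w * ep * Q <= 0.
    have : ep * (w * Q) = w * ep * Q by ring.
    lra.
  lra.
rewrite ler_pdivrMr // mulrAC ler_pdivlMr //.
set k := ep - al - 2 * w * ep * ep + w * ep * al.
have -> : (Q - ep * T) * (1 - 2 * w * ep) = (Q - al * T) * (1 - w * ep) - (w * ep * Q + k * T).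
  by rewrite /k; ring.
suff : 0 <= w * ep * Q + k * T by lra.
have kabs : `|k| <= ep.
  rewrite ler_norml; apply/andP; split.
  - have h1 : w * ep * al <= w * ep * ep by rewrite ler_pM2l // ltW.
    have h2 : 2 * w * ep * ep <= ep.
      rewrite -[leRHS]mul1r ler_pM2r; [lra|exact: lt_trans ae].
    rewrite /k; have : 0 <= w * ep * al by rewrite mulr_ge0 // ltW.
    lra.
  - have h3 : w * ep * al <= 2 * w * ep * ep.
      have : w * ep * al <= w * ep * ep by rewrite ler_pM2l // ltW.
      have : 0 <= w * ep * ep by rewrite mulr_ge0 // ltW // (lt_trans a0).
      lra.
    rewrite /k; lra.
have : `|k * T| <= ep * (w * Q).
  rewrite normrM; apply: le_trans (ler_pM _ _ kabs hT) _ => //.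
have : ep * (w * Q) = w * ep * Q by ring.
move: (ler_norm (k * T)); rewrite -normrN => hN.
have := ler_norm (- (k * T)).
lra.
Qed.

End P9.
Section P10.
Context {R : realType}.
Local Notation leb := (@lebesgue_measure R).
Local Open Scope classical_set_scope.

Lemma H10_sq (a b : R) (v vx : R -> R) : a < b -> H10 a b v vx ->
  leb.-integrable (Itv a b) (fun x => (v x ^+ 2)%:E).
Proof.
move=> ab [[mvx ivx2] [hv vb]].
have [_ ivxc] := L2_int a b vx ab (conj mvx ivx2).
by have [_ ] := prim_props a b v vx ab ivxc hv.
Qed.

Lemma gbound (a b : R) (u ux v vx : R -> R) (r : R) : a < b ->
  H10 a b u ux -> H10 a b v vx -> 0 < r ->
  `|ip1 a b u ux v vx| <=
    r / 2 * (nrm2 a b u + nrm2 a b ux)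
    + 1 / (2 * r) * (1 + (b - a) ^+ 2 / 6) * nrm2 a b vx.
Proof.
move=> ab hu hv r0.
have iu := H10_sq a b u ux ab hu; have iv := H10_sq a b v vx ab hv.
have iux := hu.1.2; have ivx := hv.1.2.
have c1 := CSr (Itv a b) u v r (measurable_itv _) iu iv r0.
have c2 := CSr (Itv a b) ux vx r (measurable_itv _) iux ivx r0.
have pv := poinc a b v vx ab hv.
rewrite /ip1.
apply: le_trans (ler_normD _ _) _.
have e : forall g : R -> R, Rintegral leb (Itv a b) (fun x => g x ^+ 2) = nrm2 a b g.
  by move=> g; rewrite /nrm2 /ipL2; apply: eq_Rintegral => x _; rewrite expr2.
rewrite /ipL2 in c1 c2 *; rewrite !e in c1 c2.
have r2 : 0 < 1 / (2 * r) by rewrite divr_gt0 // mulr_gt0.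
have : 1 / (2 * r) * nrm2 a b v <= 1 / (2 * r) * ((b - a) ^+ 2 / 6 * nrm2 a b vx).
  by rewrite ler_pM2l.
lra.
Qed.

Lemma pbound (a b : R) (f vx : R -> R) (v : R -> R) (q : R) : a < b ->
  L2 a b f -> H10 a b v vx -> 0 < q ->
  `|ipL2 a b (primF a f) vx| <=
    q / 2 * nrm2 a b (primF a f) + 1 / (2 * q) * nrm2 a b vx.
Proof.
move=> ab hf hv q0.
have [_ ifc] := L2_int a b f ab hf.
have [_ iF] := prim_props a b (primF a f) f ab ifc (fun x _ => erefl).
have c := CSr (Itv a b) (primF a f) vx q (measurable_itv _) iF hv.1.2 q0.
have e : forall g : R -> R, Rintegral leb (Itv a b) (fun x => g x ^+ 2) = nrm2 a b g.
  by move=> g; rewrite /nrm2 /ipL2; apply: eq_Rintegral => x _; rewrite expr2.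
by rewrite !e in c.
Qed.

Lemma sbound (mu h phi : R -> R) (A B : R) :
  (forall s, 0 < s -> 0 <= mu s) ->
  leb.-integrable (@Rplus_set R) (EFin \o mu) ->
  leb.-integrable (@Rplus_set R) (fun s => (mu s * h s)%:E) ->
  (forall s, 0 < s -> `|phi s| <= A + B * h s) ->
  `|Rintegral leb (@Rplus_set R) (fun s => mu s * phi s)| <=
    A * Rintegral leb (@Rplus_set R) mu + B * Rintegral leb (@Rplus_set R) (fun s => mu s * h s).
Proof.
move=> mu0 imu imh hphi.
have mR : measurable ((@Rplus_set R) : set (measurableTypeR R)) by exact: measurable_itv.
have [iG eG] := lin2 (@Rplus_set R) mu (fun s => mu s * h s) A B mR imu imh.
rewrite -eG; apply: S1 => // s Rs.
have s0 : 0 < s by move: Rs; rewrite /Rplus_set /= in_itv /= andbT.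
rewrite normrM ger0_norm ?mu0 //.
have := hphi s s0 => hp.
have : mu s * `|phi s| <= mu s * (A + B * h s) by rewrite ler_wpM2l ?mu0.
have -> : mu s * (A + B * h s) = A * mu s + B * (mu s * h s) by ring.
by [].
Qed.

End P10.
Section P11.
Context {R : realType}.

Lemma pi_le175 : pi <= 17 / 5 :> R.
Proof.
rewrite leNgt; apply/negP => h.
have p0 : 0 < pi :> R := pi_gt0 R.
have h1 : - (pi / 2) < 17 / 10 :> R by lra.
have h2 : 17 / 10 < pi / 2 :> R by lra.
have := @cos_gt0_pihalf R (17 / 10); rewrite h1 h2 => /(_ isT).
have := @cos_1710_lt0 R; lra.
Qed.

Lemma omega_facts (a b : R) : a < b ->
  0 < omega a b /\ 1 + (b - a) ^+ 2 / 6 <= 2 * omega a b ^+ 2.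
Proof.
move=> ab.
have L0 : 0 < b - a by rewrite subr_gt0.
have p0 : 0 < pi :> R := pi_gt0 R.
have l0 : 0 < lambda1 a b by rewrite /lambda1 exprn_gt0 // divr_gt0.
have q0 : 0 < (1 + lambda1 a b) / lambda1 a b by rewrite divr_gt0 // addr_gt0.
split; first by rewrite /omega sqrtr_gt0.
rewrite /omega sqr_sqrtr ?ltW //.
have -> : 2 * ((1 + lambda1 a b) / lambda1 a b) = 2 + 2 * (b - a) ^+ 2 / pi ^+ 2.
  rewrite /lambda1; move: (@pi R) p0 => P P0; field.
  by rewrite (gt_eqF P0) (gt_eqF L0).
have pi12 : pi ^+ 2 <= 12 :> R.
  have := pi_le175; have := p0 => p0' h.
  have : pi ^+ 2 <= (17 / 5) ^+ 2 :> R by rewrite ler_pXn2r // ?nnegrE ?ltW //; lra.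
  move=> h2; apply: le_trans h2 _; rewrite expr2; lra.
have pp : 0 < pi ^+ 2 :> R by rewrite exprn_gt0.
have : (b - a) ^+ 2 / 6 <= 2 * (b - a) ^+ 2 / pi ^+ 2.
  rewrite ler_pdivlMr // mulrAC ler_pdivrMr //.
  have Lp : 0 <= (b - a) ^+ 2 by exact: sqr_ge0.
  have : (b - a) ^+ 2 * pi ^+ 2 <= (b - a) ^+ 2 * 12 by rewrite ler_wpM2l.
  lra.
lra.
Qed.

End P11.
Theorem lemma6p1 (R : realType) (a b : R) (f mu : R -> R)
    (u ux : R -> R) (eta etax : R -> R -> R) (alpha eps : R) :
  a < b -> L2 a b f -> memory_kernel mu ->
  H10 a b u ux -> memory_elt a b mu eta etax ->
  0 < alpha -> alpha < eps -> eps < 1 / (2 * omega a b) ->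
  Lambda a b f mu alpha u ux eta etax
    <= Lambda a b f mu eps u ux eta etax / (1 - omega a b * eps) /\
  Lambda a b f mu eps u ux eta etax / (1 - omega a b * eps)
    <= Lambda a b f mu alpha u ux eta etax / (1 - 2 * omega a b * eps).
Proof.
move=> ab hf hmk hu hme a0 ae ew.
have [mu0 [_ [_ [_ [imu [Kpos _]]]]]] := hmk.
have [hH [_ imh]] := hme.
have [w0 hc] := omega_facts a b ab.
set w := omega a b in w0 hc ew *.
set c := (b - a) ^+ 2 / 6 in hc.
set K := Rintegral (@lebesgue_measure R) (@Rplus_set R) mu in Kpos.
set U := nrm2 a b u.
set V := nrm2 a b ux.
set Phi := nrm2 a b (primF a f).
set Y := Rintegral (@lebesgue_measure R) (@Rplus_set R) (fun s => mu s * nrm2 a b (etax s)).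
set J := Rintegral (@lebesgue_measure R) (@Rplus_set R) (fun s => mu s * ip1 a b u ux (eta s) (etax s)).
set P := Rintegral (@lebesgue_measure R) (@Rplus_set R) (fun s => mu s * ipL2 a b (primF a f) (etax s)).
have n0 : forall g : R -> R, 0 <= nrm2 a b g.
  move=> g; apply: Rintegral_ge0 => x _; rewrite -expr2; exact: sqr_ge0.
have U0 : 0 <= U := n0 u.
have V0 : 0 <= V := n0 ux.
have Phi0 : 0 <= Phi := n0 _.
have Y0 : 0 <= Y.
  apply: Rintegral_ge0 => s; rewrite /Rplus_set /= in_itv /= andbT => s0.
  by rewrite mulr_ge0 ?mu0.
set sK := Num.sqrt K.
have sK0 : 0 < sK by rewrite sqrtr_gt0.
have sKK : sK ^+ 2 = K by rewrite sqr_sqrtr // ltW.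
have hJ : forall r, 0 < r -> `|J| <= r / 2 * (U + V) * K + 1 / (2 * r) * (1 + c) * Y.
  move=> r r0; apply: (sbound _ _ _ _ _ mu0 imu imh) => s s0.
  exact: gbound ab hu (hH s s0) r0.
have hP : forall q, 0 < q -> `|P| <= q / 2 * Phi * K + 1 / (2 * q) * Y.
  move=> q q0; apply: (sbound _ _ _ _ _ mu0 imu imh) => s s0.
  exact: pbound ab hf (hH s s0) q0.
set Q := U + V + Y + 2 / K * P + 2 / K * Phi.
set T := J / sK.
have Qlow : U + V + Y / 2 <= Q.
  have q0 : 0 < 2 / K by rewrite divr_gt0.
  have := hP (2 / K) q0.
  have -> : 2 / K / 2 * Phi * K + 1 / (2 * (2 / K)) * Y = Phi + K * Y / 4.
    by field; rewrite gt_eqF.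
  rewrite ler_norml => /andP[hP1 _].
  have : 2 / K * (- P) <= 2 / K * (Phi + K * Y / 4).
    by rewrite ler_pM2l ?divr_gt0 //; lra.
  have -> : 2 / K * (Phi + K * Y / 4) = 2 / K * Phi + Y / 2 by field; rewrite gt_eqF.
  rewrite /Q; lra.
have hT : `|T| <= w * Q.
  have rr : 0 < 2 * w / sK by rewrite divr_gt0 // mulr_gt0.
  have := hJ _ rr.
  have -> : 2 * w / sK / 2 * (U + V) * K + 1 / (2 * (2 * w / sK)) * (1 + c) * Y =
      sK * w * (U + V) + sK / (4 * w) * (1 + c) * Y.
    by rewrite -sKK; field; rewrite !gt_eqF.
  have : sK / (4 * w) * (1 + c) * Y <= sK / (4 * w) * (2 * w ^+ 2) * Y.
    rewrite ler_wpM2r // ler_wpM2l // ltW // divr_gt0 // mulr_gt0 //.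
  have -> : sK / (4 * w) * (2 * w ^+ 2) * Y = sK * (w * Y / 2).
    by field; rewrite gt_eqF.
  move=> h1 h2.
  have h3 : `|J| <= sK * (w * (U + V) + w * Y / 2).
    have -> : sK * (w * (U + V) + w * Y / 2) = sK * w * (U + V) + sK * (w * Y / 2) by ring.
    lra.
  rewrite /T normrM normfV (gtr0_norm sK0) ler_pdivrMr //.
  apply: le_trans h3 _; rewrite [X in _ <= X]mulrC ler_pM2l //.
  have : w * (U + V + Y / 2) <= w * Q by rewrite ler_pM2l.
  have -> : w * (U + V + Y / 2) = w * (U + V) + w * Y / 2 by ring.
  by [].
have LE : forall e, Lambda a b f mu e u ux eta etax = Q - e * T.
  move=> e; rewrite /Lambda /normH2 /kappa -/K -/U -/V -/Y -/J -/P -/Phi -/sK /Q /T.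
  ring.
rewrite !LE.
exact: fin_alg w0 a0 ae ew hT.
Qed.
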